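(* Let $(\mathcal{V},g)$ be a finite-dimensional real scalar product space, let $J_1,\dots,J_m$ be skew-adjoint endomorphisms of $\mathcal{V}$ with $J_iJ_j+J_jJ_i=2c_i\delta_{ij}\,\mathrm{id}$ for $1\le i,j\le m$, where $c_i\in\{-1,1\}$, and let $\mu_0,\dots,\mu_m\in\mathbb{R}$. If $(3c_i\mu_i+\mu_0)\mu_i>0$ for all $1\le i\le m$, or $(3c_i\mu_i+\mu_0)\mu_i<0$ for all $1\le i\le m$, then the (semi-Clifford) algebraic curvature tensor $R=\mu_0R^0+\sum_{i=1}^m\mu_iR^{J_i}$ is totally Jacobi-dual.
   Context: A scalar product space is a finite-dimensional real vector space with a nondegenerate symmetric bilinear form $g$; $\varepsilon_X=g(X,X)$. $R^0(X,Y,Z,W)=g(Y,Z)g(X,W)-g(X,Z)g(Y,W)$; for skew-adjoint $J$, $R^J(X,Y,Z,W)=g(JX,Z)g(JY,W)-g(JY,Z)g(JX,W)+2g(JX,Y)g(JZ,W)$. The Jacobi operator is $\mathcal{J}_X(Y)=\sum_{i}\varepsilon_{E_i}R(Y,X,X,E_i)E_i$ for an orthonormal basis $(E_i)$. An eigenvector of $\mathcal{J}_X$ is a nonzero $Y$ with $\mathcal{J}_X(Y)=\lambda Y$, $\lambda\in\mathbb{R}$. $R$ is totally Jacobi-dual if for all $X,Y\in\mathcal{V}$ with $X\neq0$: whenever $Y$ is an eigenvector of $\mathcal{J}_X$, then $X$ is an eigenvector of $\mathcal{J}_Y$. *)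

(* Defs.v *)
(* The scalar product space (V,g) is modelled as the row
   vectors 'rV[R]_n over a realType R, with g(x,y) = x G y^T for a symmetric
   invertible matrix G. Endomorphisms are matrices acting on the right:
   J(X) := X *m J, so (J1 o J2)(X) = X *m J2 *m J1. *)
From HB Require Import structures.
From mathcomp Require Import all_boot all_order all_algebra.
From mathcomp Require Import reals.
Set Implicit Arguments. Unset Strict Implicit. Unset Printing Implicit Defensive.
Import Order.TTheory GRing.Theory Num.Theory.
Local Open Scope ring_scope.

Section Defs.
Variables (R : realType) (n : nat).
Implicit Types (G J : 'M[R]_n) (X Y Z W : 'rV[R]_n).

Definition form G X Y : R := (X *m G *m Y^T) 0 0.

Definition scalar_product G : Prop := G^T = G /\ G \in unitmx.

Definition act J X : 'rV[R]_n := X *m J.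

Definition skew_adjoint G J : Prop :=
  forall X Y, form G (act J X) Y = - form G X (act J Y).

Definition R0 G X Y Z W : R :=
  form G Y Z * form G X W - form G X Z * form G Y W.

Definition RJ G J X Y Z W : R :=
  form G (act J X) Z * form G (act J Y) W
  - form G (act J Y) Z * form G (act J X) W
  + 2 * form G (act J X) Y * form G (act J Z) W.

(* Jacobi operator J_X(Y): the vector with g(J_X Y, W) = R(Y,X,X,W) for all W
   (index raising with g^{-1}; equals sum_i eps_i R(Y,X,X,E_i) E_i for any
   orthonormal basis E). *)
Definition jacobi G (Rt : 'rV[R]_n -> 'rV[R]_n -> 'rV[R]_n -> 'rV[R]_n -> R)
  X Y : 'rV[R]_n :=
  (\row_j Rt Y X X (delta_mx 0 j)) *m invmx G.

Definition eigenvector (A : 'rV[R]_n -> 'rV[R]_n) Y : Prop :=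
  Y != 0 /\ exists lambda : R, A Y = lambda *: Y.

Definition totally_jacobi_dual G
  (Rt : 'rV[R]_n -> 'rV[R]_n -> 'rV[R]_n -> 'rV[R]_n -> R) : Prop :=
  forall X Y, X != 0 -> eigenvector (jacobi G Rt X) Y ->
    eigenvector (jacobi G Rt Y) X.

End Defs.

(* Main.v *)
Require Import Defs.
From mathcomp Require Import all_boot all_order all_algebra.
From mathcomp Require Import reals.
From mathcomp Require Import ring lra.
Set Implicit Arguments. Unset Strict Implicit. Unset Printing Implicit Defensive.
Import Order.TTheory GRing.Theory Num.Theory.
Local Open Scope ring_scope.

Section Aux.
Variables (R : realType) (n : nat) (G : 'M[R]_n).
Local Notation g := (@Defs.form R n G).

Lemma formDl X X' Y : g (X + X') Y = g X Y + g X' Y.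
Proof. by rewrite /Defs.form !mulmxDl mxE. Qed.
Lemma formZl a X Y : g (a *: X) Y = a * g X Y.
Proof. by rewrite /Defs.form -!scalemxAl mxE. Qed.
Lemma formNl X Y : g (- X) Y = - g X Y.
Proof. by rewrite -scaleN1r formZl mulN1r. Qed.
Lemma formsuml I (r : seq I) (P : pred I) F Y :
  g (\sum_(i <- r | P i) F i) Y = \sum_(i <- r | P i) g (F i) Y.
Proof. by rewrite /Defs.form !mulmx_suml summxE. Qed.

Hypothesis Gsym : G^T = G.
Lemma form_sym X Y : g X Y = g Y X.
Proof.
rewrite /Defs.form.
have -> : (Y *m G *m X^T) 0 0 = ((Y *m G *m X^T)^T) 0 0 by rewrite [RHS]mxE.
by rewrite !trmx_mul trmxK Gsym mulmxA.
Qed.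

Hypothesis Gunit : G \in unitmx.
Lemma jacobi_eq (Rt : 'rV[R]_n -> 'rV[R]_n -> 'rV[R]_n -> 'rV[R]_n -> R) A B v :
  (forall W, Rt B A A W = g v W) -> jacobi G Rt A B = v.
Proof.
move=> h; rewrite /jacobi.
have -> : (\row_j Rt B A A (delta_mx 0 j)) = v *m G.
  apply/rowP => j; rewrite mxE h /Defs.form trmx_delta -colE mxE.
  by [].
by rewrite mulmxK.
Qed.

Section Main.
Variables (m : nat) (J : 'I_m -> 'M[R]_n) (c : 'I_m -> R) (mu0 : R) (mu : 'I_m -> R).
Hypothesis sk : forall i, skew_adjoint G (J i).
Hypothesis hJ : forall i j, J j *m J i + J i *m J j = (2 * c i * (i == j)%:R)%:M.

Definition Rt := (fun X Y Z W => mu0 * R0 G X Y Z W + \sum_(i < m) mu i * RJ G (J i) X Y Z W).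
Definition Zm A B := \sum_(i < m) (mu i * g B (A *m J i)) *: J i.

Lemma skew0 i A : g (A *m J i) A = 0.
Proof. have := sk i A A; rewrite /act [in RHS]form_sym => h; lra. Qed.

Lemma jac_formula A B : jacobi G Rt A B =
  mu0 *: (g A A *: B - g A B *: A) + (-3) *: (A *m Zm A B).
Proof.
apply: jacobi_eq => W.
rewrite formDl !formZl formDl formNl !formZl /Zm mulmx_sumr formsuml.
rewrite /Rt mulr_sumr; congr (_ + _).
  rewrite /R0 (form_sym A B); ring.
apply: eq_bigr => i _.
rewrite -scalemxAr formZl /RJ /act skew0.
have := sk i B A; rewrite /act => ->.
ring.
Qed.

Lemma ZmN A B : Zm B A = - Zm A B.
Proof.
rewrite /Zm -sumrN; apply: eq_bigr => i _.
rewrite form_sym; have := sk i B A; rewrite /act => ->.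
by rewrite mulrN scaleNr.
Qed.

Lemma Jsq (x : 'I_m -> R) :
  (\sum_i x i *: J i) *m (\sum_i x i *: J i) = (\sum_i c i * x i ^+ 2)%:M.
Proof.
set S := (\sum_i x i *: J i) *m (\sum_i x i *: J i).
have eS : S = \sum_i \sum_j (x i * x j) *: (J i *m J j).
  rewrite /S mulmx_suml; apply: eq_bigr => i _.
  rewrite mulmx_sumr; apply: eq_bigr => j _.
  by rewrite -scalemxAl -scalemxAr scalerA.
have eS2 : S = \sum_i \sum_j (x i * x j) *: (J j *m J i).
  rewrite eS exchange_big; apply: eq_bigr => i _; apply: eq_bigr => j _.
  by rewrite mulrC.
have : S + S = (\sum_i (2 * c i * x i ^+ 2))%:M.
  rewrite [in X in X + _]eS eS2 -big_split /= raddf_sum.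
  apply: eq_bigr => i _; rewrite -big_split /=.
  rewrite (bigD1 i) //= big1.
    rewrite -scalerDr hJ eqxx -scalemx1 scalerA scalemx1 addr0.
    by congr (_%:M); rewrite /= mulr1 expr2; ring.
  move=> j /negPf ne; rewrite -scalerDr hJ ne mulr0 -scalemx1 scale0r scaler0 //.
move=> h.
have -> : S = 2^-1 *: (S + S).
  by rewrite -mulr2n -scaler_nat scalerA mulVf ?scale1r // pnatr_eq0.
rewrite h -[(\sum_i 2 * c i * x i ^+ 2)%:M]scalemx1 scalerA scalemx1; congr (_%:M).
rewrite mulr_sumr; apply: eq_bigr => i _; by rewrite !mulrA mulVf ?mul1r // pnatr_eq0.
Qed.

Lemma alg1 (eps p q lam s x y xz yz : R) : lam - mu0*eps != 0 ->
  mu0*(eps*y - p*x) + -3*xz = lam*y ->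
  mu0*(eps*yz - p*xz) + -3*(s*x) = lam*yz ->
  mu0 * (q * x - p * y) + -3 * (- yz) = (mu0 * q + (mu0 ^+ 2 * p ^+ 2 - 9 * s) / (lam - mu0 * eps)) * x.
Proof.
move=> k h1 h2.
have exz : xz = (mu0*(eps*y-p*x) - lam*y)/3 by rewrite -h1; field.
have eyz : yz = (-(mu0* p*xz) - 3*s*x)/(lam - mu0*eps).
  apply/(mulfI k); rewrite [RHS]mulrC divfK //; lra.
rewrite eyz exz; field.
by rewrite k.
Qed.

Hypothesis hs : (forall i, 0 < (3 * c i * mu i + mu0) * mu i) \/
   (forall i, (3 * c i * mu i + mu0) * mu i < 0).

Lemma all0 (a : 'I_m -> R) :
  \sum_i (3 * c i * mu i + mu0) * mu i * a i ^+ 2 = 0 -> forall i, a i = 0.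
Proof.
move=> hT i.
suff : (3 * c i * mu i + mu0) * mu i * a i ^+ 2 = 0.
  move/eqP; rewrite mulf_eq0 sqrf_eq0 => /orP [|/eqP //].
  by case: hs => h; move: (h i) => hi /eqP e; move: hi; rewrite e ltxx.
case: hs => h.
  apply: (psumr_eq0P _ hT) => // j _.
  by apply: mulr_ge0; [exact: ltW | exact: sqr_ge0].
apply/eqP; rewrite -oppr_eq0; apply/eqP.
have hT' : \sum_j - ((3 * c j * mu j + mu0) * mu j * a j ^+ 2) = 0 by rewrite sumrN hT oppr0.
apply: (psumr_eq0P _ hT') => // j _.
by rewrite -mulNr; apply: mulr_ge0; [rewrite oppr_ge0; exact: ltW | exact: sqr_ge0].
Qed.

Lemma dual X Y : X != 0 -> eigenvector (jacobi G Rt X) Y -> eigenvector (jacobi G Rt Y) X.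
Proof.
move=> X0 [Y0 [lam hE]]; split=> //.
rewrite jac_formula in hE; rewrite jac_formula ZmN.
rewrite (form_sym Y X).
set Z := Zm X Y in hE *.
set eps := g X X in hE *. set p := g X Y in hE *.
set q := g Y Y.
set sig := \sum_i c i * (mu i * g Y (X *m J i)) ^+ 2.
have hZ : Z *m Z = sig%:M by exact: Jsq.
have hE2 : mu0 *: (eps *: (Y *m Z) - p *: (X *m Z)) + (-3) *: (sig *: X) = lam *: (Y *m Z).
  have := congr1 (mulmx^~ Z) hE; rewrite /= mulmxDl -!scalemxAl mulmxBl -!scalemxAl -mulmxA hZ mul_mx_scalar //.
have [k0|kne] := eqVneq (lam - mu0 * eps) 0; last first.
  exists (mu0 * q + (mu0 ^+ 2 * p ^+ 2 - 9 * sig) / (lam - mu0 * eps)).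
  apply/rowP => j.
  have := congr1 (fun v : 'rV_n => v 0 j) hE.
  have := congr1 (fun v : 'rV_n => v 0 j) hE2.
  rewrite /= mulmxN !mxE => h2 h1.
  exact: alg1 kne h1 h2.
have el : lam = mu0 * eps by apply/eqP; rewrite -subr_eq0 k0.
have V1 : mu0 * p *: X + 3 *: (X *m Z) = 0.
  apply/rowP => j; have := congr1 (fun v : 'rV_n => v 0 j) hE.
  rewrite /= !mxE el => h1; lra.
have V2 : mu0 * p *: (X *m Z) + 3 *: (sig *: X) = 0.
  have := congr1 (mulmx^~ Z) V1; rewrite /= mul0mx mulmxDl -!scalemxAl -mulmxA hZ mul_mx_scalar //.
have V3 : (9 * sig - mu0 ^+ 2 * p ^+ 2) *: X = 0.
  apply/rowP => j; have := congr1 (fun v : 'rV_n => v 0 j) V1.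
  have := congr1 (fun v : 'rV_n => v 0 j) V2.
  rewrite /= !mxE => h2 h1.
  have ex : (X *m Z) 0 j = \sum_j0 X 0 j0 * Z j0 j by rewrite mxE.
  rewrite -ex in h1 h2.
  have exz : (X *m Z) 0 j = - (mu0 * p * X 0 j) / 3.
    have e3 : 3 * (X *m Z) 0 j = - (mu0 * p * X 0 j) by lra.
    by rewrite -e3; field.
  rewrite exz in h2.
  transitivity (3 * (mu0 * p * (- (mu0 * p * X 0 j) / 3) + 3 * (sig * X 0 j))); first by field.
  by rewrite h2 mulr0.
have esig : 9 * sig = mu0 ^+ 2 * p ^+ 2.
  by move/eqP: V3; rewrite scaler_eq0 (negPf X0) orbF subr_eq0 => /eqP.
set s1 := \sum_i mu i * g Y (X *m J i) ^+ 2.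
have hs1 : mu0 * p ^+ 2 + 3 * s1 = 0.
  have := congr1 (fun v => g v Y) V1.
  rewrite /= formDl !formZl /Z /Zm mulmx_sumr formsuml.
  have -> : g 0 Y = 0 by rewrite /Defs.form !mul0mx mxE.
  move=> <-; rewrite -/p; congr (_ + _); first by rewrite expr2 mulrA.
  congr (_ * _); apply: eq_bigr => i _; rewrite -scalemxAr formZl (form_sym _ Y); ring.
have a0 : forall i, g Y (X *m J i) = 0.
  apply: all0.
  have -> : \sum_i (3 * c i * mu i + mu0) * mu i * g Y (X *m J i) ^+ 2 = 3 * sig + mu0 * s1.
    rewrite /sig /s1 !mulr_sumr -big_split; apply: eq_bigr => i _ /=; ring.
  have : 9 * (3 * sig + mu0 * s1) = 0.
    have -> : 9 * (3 * sig + mu0 * s1) = 3 * (9 * sig) + 3 * mu0 * (3 * s1) by ring.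
    have -> : 3 * s1 = - (mu0 * p ^+ 2) by lra.
    rewrite esig; ring.
  by move/eqP; rewrite mulf_eq0 pnatr_eq0 /= => /eqP.
have Z0 : Z = 0.
  by rewrite /Z /Zm big1 // => i _; rewrite a0 mulr0 scale0r.
rewrite Z0 in V1; rewrite Z0.
have hp : mu0 * p = 0.
  by move/eqP: V1; rewrite mulmx0 scaler0 addr0 scaler_eq0 (negPf X0) orbF => /eqP.
exists (mu0 * q); apply/rowP => j; rewrite oppr0 mulmx0 scaler0 addr0 !mxE.
by rewrite mulrBr mulrA mulrA hp mul0r subr0.
Qed.
End Main.
End Aux.

Theorem mainTheorem6 (R : realType) (n m : nat) (G : 'M[R]_n)
  (J : 'I_m -> 'M[R]_n) (c : 'I_m -> R) (mu0 : R) (mu : 'I_m -> R) :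
  scalar_product G ->
  (forall i, skew_adjoint G (J i)) ->
  (forall i, c i = 1 \/ c i = -1) ->
  (forall i j, J j *m J i + J i *m J j = (2 * c i * (i == j)%:R)%:M) ->
  ((forall i, 0 < (3 * c i * mu i + mu0) * mu i) \/
   (forall i, (3 * c i * mu i + mu0) * mu i < 0)) ->
  totally_jacobi_dual G
    (fun X Y Z W => mu0 * R0 G X Y Z W + \sum_(i < m) mu i * RJ G (J i) X Y Z W).
Proof.
move=> [Gsym Gunit] sk _ hJ hs X Y X0 hY.
exact: (@dual R n G Gsym Gunit m J c mu0 mu sk hJ hs X Y X0 hY).
Qed.
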